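(* Let $\boldsymbol{u}^\star\in\mathbb{R}^n\setminus\{\boldsymbol{0}\}$ and $f(\boldsymbol{u})=\frac12\|\boldsymbol{u}\boldsymbol{u}^{\mathrm T}-\boldsymbol{u}^\star{\boldsymbol{u}^\star}^{\mathrm T}\|_1$ on $\mathbb{R}^n$. Let $\boldsymbol{u}$ be any spurious stationary point of $f$ and let $\boldsymbol{w}=\boldsymbol{u}^\star-\boldsymbol{u}$ or $\boldsymbol{w}=-\boldsymbol{u}^\star-\boldsymbol{u}$. Then: (i) $d^2f(\boldsymbol{u})(\boldsymbol{w})=-\|\boldsymbol{u}^\star\|_1^2<0$; (ii) $\inf_{\boldsymbol{z}\in\mathbb{R}^n}d^2f(\boldsymbol{u})(\boldsymbol{w}\,|\,\boldsymbol{z})=-\|\boldsymbol{u}^\star\|_1^2<0$, i.e. for every $\varepsilon>0$ there is $\boldsymbol{z}\in\mathbb{R}^n$ with $d^2f(\boldsymbol{u})(\boldsymbol{w}\,|\,\boldsymbol{z})<-\|\boldsymbol{u}^\star\|_1^2+\varepsilon$; (iii) $f''(\boldsymbol{u};\boldsymbol{w})=-\|\boldsymbol{u}^\star\|_1^2<0$.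
   Context: $\|\cdot\|_1$ is the entrywise $\ell_1$-norm. $df(\boldsymbol{x})(\boldsymbol{w})=\lim_{t\searrow0}(f(\boldsymbol{x}+t\boldsymbol{w})-f(\boldsymbol{x}))/t$ (directional derivative). Second subderivative (no $\boldsymbol{v}$): $d^2f(\boldsymbol{x})(\boldsymbol{w})=\liminf_{t\searrow0,\boldsymbol{w}'\to\boldsymbol{w}}\frac{f(\boldsymbol{x}+t\boldsymbol{w}')-f(\boldsymbol{x})-t\,df(\boldsymbol{x})(\boldsymbol{w}')}{t^2/2}$. Parabolic subderivative: $d^2f(\boldsymbol{x})(\boldsymbol{w}\,|\,\boldsymbol{z})=\liminf_{t\searrow0,\boldsymbol{z}'\to\boldsymbol{z}}\frac{f(\boldsymbol{x}+t\boldsymbol{w}+\frac12t^2\boldsymbol{z}')-f(\boldsymbol{x})-t\,df(\boldsymbol{x})(\boldsymbol{w})}{t^2/2}$. One-sided second directional derivative: $f''(\boldsymbol{x};\boldsymbol{w})=\lim_{t\searrow0}\frac{f(\boldsymbol{x}+t\boldsymbol{w})-f(\boldsymbol{x})-t\,df(\boldsymbol{x})(\boldsymbol{w})}{t^2/2}$. A point $\boldsymbol{u}$ is stationary if $\boldsymbol{0}\in\partial f(\boldsymbol{u})$, where $\partial f(\boldsymbol{u})=\{\boldsymbol{Z}\boldsymbol{u}:\boldsymbol{Z}\text{ symmetric}, \boldsymbol{Z}\in\operatorname{Sign}(\boldsymbol{u}\boldsymbol{u}^{\mathrm T}-\boldsymbol{u}^\star{\boldsymbol{u}^\star}^{\mathrm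 T})\}$ (entrywise set-valued sign, $\operatorname{Sign}(0)=[-1,1]$); it is spurious if additionally $\boldsymbol{u}\notin\{\pm\boldsymbol{u}^\star\}$. *)

(* Defs.v *)
From HB Require Import structures.
From mathcomp Require Import all_boot all_order all_algebra.
From mathcomp Require Import all_classical all_reals all_analysis.
Set Implicit Arguments. Unset Strict Implicit. Unset Printing Implicit Defensive.
Import Order.TTheory GRing.Theory Num.Theory.
Import numFieldNormedType.Exports.
Local Open Scope classical_set_scope.
Local Open Scope ring_scope.

Section Defs.
Variable R : realType.

Definition l1 m k (A : 'M[R]_(m, k)) : R := \sum_i \sum_j `|A i j|.

Definition fobj n (us u : 'cV[R]_n) : R := 2^-1 * l1 (u *m u^T - us *m us^T).

Definition dirder n (f : 'cV[R]_n -> R) (x w : 'cV[R]_n) : R :=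
  lim ((fun t : R => (f (x + t *: w) - f x) / t) @ 0^'+).

Definition d2sub n (f : 'cV[R]_n -> R) (x w : 'cV[R]_n) : \bar R :=
  limf_einf (fun p : R * 'cV[R]_n =>
     ((f (x + p.1 *: p.2) - f x - p.1 * dirder f x p.2) / (p.1 ^+ 2 / 2))%:E)
    (filter_prod (0^'+) (nbhs w)).

Definition d2par n (f : 'cV[R]_n -> R) (x w z : 'cV[R]_n) : \bar R :=
  limf_einf (fun p : R * 'cV[R]_n =>
     ((f (x + p.1 *: w + (2^-1 * p.1 ^+ 2) *: p.2) - f x - p.1 * dirder f x w)
        / (p.1 ^+ 2 / 2))%:E)
    (filter_prod (0^'+) (nbhs z)).

(* difference quotient whose limit as t \searrow 0 is f''(x;w) *)
Definition sd2quot n (f : 'cV[R]_n -> R) (x w : 'cV[R]_n) (t : R) : R :=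
  (f (x + t *: w) - f x - t * dirder f x w) / (t ^+ 2 / 2).

Definition in_Sign m k (Z M : 'M[R]_(m, k)) : Prop :=
  forall i j, (0 < M i j -> Z i j = 1) /\ (M i j < 0 -> Z i j = -1) /\
              (M i j = 0 -> -1 <= Z i j <= 1).

Definition subdiff n (us u : 'cV[R]_n) : set 'cV[R]_n :=
  [set Z *m u | Z in [set Z : 'M[R]_n | Z^T = Z /\ in_Sign Z (u *m u^T - us *m us^T)]].

Definition stationary n (us u : 'cV[R]_n) : Prop := subdiff us u 0.

Definition spurious_stationary n (us u : 'cV[R]_n) : Prop :=
  stationary us u /\ u <> us /\ u <> - us.

End Defs.

(* Main.v *)
Require Import Defs.
From HB Require Import structures.
From mathcomp Require Import all_boot all_order all_algebra.
From mathcomp Require Import all_classical all_reals all_analysis.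
From mathcomp Require Import ring lra.
Import Order.TTheory GRing.Theory Num.Theory.
Import numFieldNormedType.Exports.
Local Open Scope classical_set_scope.
Local Open Scope ring_scope.
Set Implicit Arguments. Unset Strict Implicit. Unset Printing Implicit Defensive.
Section PartA.
Variables (R : realType) (n : nat).

Definition statZ (x y : 'I_n -> R) (Z : 'I_n -> 'I_n -> R) :=
  [/\ (forall i j, Z i j = Z j i),
      (forall i j, (0 < x i * x j - y i * y j -> Z i j = 1) /\
                   (x i * x j - y i * y j < 0 -> Z i j = -1) /\
                   (x i * x j - y i * y j = 0 -> -1 <= Z i j <= 1)) &
      (forall i, \sum_j Z i j * x j = 0)].

Lemma ZM x y Z : statZ x y Z -> forall i j,
  Z i j * (x i * x j - y i * y j) = `|x i * x j - y i * y j|.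
Proof.
case=> _ Hs _ i j; have [h1 [h2 h3]] := Hs i j.
case: (ltrgtP (x i * x j - y i * y j) 0) => h.
- by rewrite h2 // ltr0_norm // mulN1r.
- by rewrite h1 // gtr0_norm // mul1r.
- by rewrite h mulr0 normr0.
Qed.

Lemma Zabs x y Z : statZ x y Z -> forall i j, `|Z i j| <= 1.
Proof.
case=> _ Hs _ i j; have [h1 [h2 h3]] := Hs i j.
case: (ltrgtP (x i * x j - y i * y j) 0) => h.
- by rewrite h2 // normrN normr1.
- by rewrite h1 // normr1.
- by rewrite ler_norml; apply: h3.
Qed.

Lemma offsupp x y Z : statZ x y Z -> forall i, y i = 0 -> x i = 0.
Proof.
move=> H i yi0; have [_ _ Hr] := H.
have e : \sum_j `|x i * x j - y i * y j| = 0.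
  transitivity (x i * \sum_j Z i j * x j); last by rewrite Hr mulr0.
  rewrite mulr_sumr; apply: eq_bigr => j _.
  rewrite -(ZM H) yi0; ring.
have := psumr_eq0P (fun j _ => normr_ge0 _) e (i:=i) isT.
rewrite yi0 mul0r subr0 => /normr0_eq0 /eqP; rewrite mulf_eq0 orbb => /eqP //.
Qed.

End PartA.
Section PartA2.
Variables (R : realType) (n : nat).

Lemma sqr_pos (y : R) : y != 0 -> 0 < y * y.
Proof. by move=> y0; rewrite -expr2 lt_def sqr_ge0 andbT sqrf_eq0. Qed.

Lemma sg_abs1 (y : R) : `|Num.sg y| <= 1.
Proof. by rewrite normr_sg; case: (y != 0). Qed.

Lemma pos_step (x y : 'I_n -> R) Z : statZ x y Z ->
  0 < \sum_i Num.sg (y i) * x i -> forall i, y i != 0 -> 0 < Num.sg (y i) * x i.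
Proof.
move=> H hs i yi; rewrite ltNge; apply/negP => hi.
have [Hsym Hs Hr] := H.
have key : \sum_j (Num.sg (y i) * Num.sg (y j) * Z i j + 1) * (Num.sg (y j) * x j)
    = \sum_j Num.sg (y j) * x j.
  transitivity (Num.sg (y i) * \sum_j Z i j * x j + \sum_j Num.sg (y j) * x j);
    last by rewrite Hr mulr0 add0r.
  rewrite mulr_sumr -big_split; apply: eq_bigr => j _ /=.
  have [yj0|yj] := eqVneq (y j) 0.
    by rewrite yj0 (offsupp H yj0) sgr0; ring.
  have ss : Num.sg (y j) * Num.sg (y j) = 1 by rewrite -expr2 sqr_sg yj.
  transitivity (Num.sg (y i) * Z i j * (Num.sg (y j) * Num.sg (y j)) * x j
     + Num.sg (y j) * x j); first ring.
  by rewrite ss; ring.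
have : \sum_j (Num.sg (y i) * Num.sg (y j) * Z i j + 1) * (Num.sg (y j) * x j) <= 0.
  apply: sumr_le0 => j _.
  have V0 : 0 <= Num.sg (y i) * Num.sg (y j) * Z i j + 1.
    have : `|Num.sg (y i) * Num.sg (y j) * Z i j| <= 1.
      rewrite !normrM; apply: mulr_ile1; rewrite ?mulr_ge0 ?normr_ge0 ?(Zabs H) //.
      by apply: mulr_ile1; rewrite ?normr_ge0 ?sg_abs1.
    by rewrite ler_norml => /andP[h _]; lra.
  case: (lerP (Num.sg (y j) * x j) 0) => hj; first exact: mulr_ge0_le0.
  have yj : y j != 0.
    by apply/eqP => yj0; move: hj; rewrite yj0 sgr0 mul0r ltxx.
  have hM : Num.sg (y i) * Num.sg (y j) * (x i * x j - y i * y j) < 0.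
    have -> : Num.sg (y i) * Num.sg (y j) * (x i * x j - y i * y j) =
      (Num.sg (y i) * x i) * (Num.sg (y j) * x j) -
      (Num.sg (y i) * y i) * (Num.sg (y j) * y j) by ring.
    rewrite -!normrEsg.
    have := mulr_le0_ge0 hi (ltW hj).
    have ai : 0 < `|y i| by rewrite normr_gt0.
    have aj : 0 < `|y j| by rewrite normr_gt0.
    have := mulr_gt0 ai aj; lra.
  have [_ [h1 [h2 _]]] := (Hs i j, Hs i j).
  have V : Num.sg (y i) * Num.sg (y j) * Z i j + 1 = 0.
    rewrite -sgrM in hM *.
    case: (ltrgtP (y i * y j) 0) => hp.
    - rewrite ltr0_sg // in hM *; rewrite h1; last by lra.
      by rewrite mulN1r addNr.
    - rewrite gtr0_sg // in hM *; rewrite h2; last by lra.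
      by rewrite mul1r addNr.
    - by move/eqP: hp; rewrite mulf_eq0 (negbTE yi) (negbTE yj).
  by rewrite V mul0r.
by rewrite key; lra.
Qed.

Lemma sigma_pos (x y : 'I_n -> R) Z : statZ x y Z ->
  0 < \sum_i Num.sg (y i) * x i -> forall i, x i = y i.
Proof.
move=> H hs; have P := pos_step H hs.
have [Hsym Hs Hr] := H.
have xy : forall i, y i != 0 -> 0 < x i * y i.
  move=> i yi; have := P i yi.
  have -> : x i * y i = (Num.sg (y i) * x i) * `|y i|.
    by rewrite {1}(numEsg (y i)); ring.
  by move=> h; apply: mulr_gt0 => //; rewrite normr_gt0.
pose q := fun i => x i / y i.
pose g := fun i => q i - (q i)^-1.
have qpos : forall i, y i != 0 -> 0 < q i.
  move=> i yi; have -> : q i = (x i * y i) / (y i * y i) by rewrite /q; field.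
  by apply: divr_gt0; [exact: xy | exact: sqr_pos].
have q0 : forall i, 0 <= q i.
  move=> i; have [yi0|yi] := eqVneq (y i) 0.
    by rewrite /q yi0 invr0 mulr0.
  exact: ltW (qpos i yi).
have term : forall i j, Z i j * ((g i + g j) * (x i * x j)) =
    (q i + q j) * `|x i * x j - y i * y j|.
  move=> i j.
  have [yi0|yi] := eqVneq (y i) 0.
    by rewrite (offsupp H yi0) yi0 !mul0r subrr normr0 !mulr0.
  have [yj0|yj] := eqVneq (y j) 0.
    by rewrite (offsupp H yj0) yj0 !mulr0 subrr normr0 !mulr0.
  have xi : x i != 0 by apply/eqP => e; move: (xy i yi); rewrite e mul0r ltxx.
  have xj : x j != 0 by apply/eqP => e; move: (xy j yj); rewrite e mul0r ltxx.
  have -> : (g i + g j) * (x i * x j) = (q i + q j) * (x i * x j - y i * y j).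
    by rewrite /g /q; field; rewrite ?xi ?yi ?xj ?yj.
  by rewrite mulrCA (ZM H).
have sum0 : \sum_i \sum_j Z i j * ((g i + g j) * (x i * x j)) = 0.
  transitivity (\sum_i \sum_j (g i * x i * (Z i j * x j) + g j * x j * (Z j i * x i))).
    apply: eq_bigr => i _; apply: eq_bigr => j _; rewrite (Hsym j i); ring.
  under eq_bigr => i _ do rewrite big_split /=.
  rewrite big_split /= [X in _ + X]exchange_big /=.
  rewrite !big1 ?addr0 // => i _; by rewrite -mulr_sumr Hr mulr0.
have e2 : \sum_i \sum_j (q i + q j) * `|x i * x j - y i * y j| = 0.
  apply: etrans sum0; apply: eq_bigr => i _; apply: eq_bigr => j _; by rewrite term.
move=> i; have [yi0|yi] := eqVneq (y i) 0.
  by rewrite yi0 (offsupp H yi0).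
have h1 := psumr_eq0P (fun i _ => sumr_ge0 _ (fun j _ =>
   mulr_ge0 (addr_ge0 (q0 i) (q0 j)) (normr_ge0 _))) e2 (i:=i) isT.
have h2 := psumr_eq0P (fun j _ =>
   mulr_ge0 (addr_ge0 (q0 i) (q0 j)) (normr_ge0 _)) h1 (i:=i) isT.
have qi := qpos i yi.
move/eqP: h2; rewrite mulf_eq0 => /orP [/eqP h|]; first by lra.
rewrite normr_eq0 subr_eq0 => /eqP e.
have : (x i - y i) * (x i + y i) = 0.
  have -> : (x i - y i) * (x i + y i) = x i * x i - y i * y i by ring.
  by rewrite e subrr.
move/eqP; rewrite mulf_eq0 => /orP [/eqP h|/eqP h]; first by lra.
have : x i = - y i by lra.
move=> e'; move: (xy i yi); rewrite e' mulNr.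
have := sqr_pos yi; lra.
Qed.

End PartA2.
Section PartA3.
Variables (R : realType) (n : nat).

Lemma sq_le_abs (a b : R) : a * a <= b * b -> `|a| <= `|b|.
Proof.
move=> h; have ha := real_normK (num_real a); have hb := real_normK (num_real b).
rewrite !expr2 in ha hb.
have := normr_ge0 a; have := normr_ge0 b; nra.
Qed.

Lemma structure (x y : 'I_n -> R) Z : statZ x y Z ->
  ~ (forall i, x i = y i) -> ~ (forall i, x i = - y i) ->
  \sum_i Num.sg (y i) * x i = 0 /\ forall i, `|x i| <= `|y i|.
Proof.
move=> H nxy nxny.
have [Hsym Hs Hr] := H.
have sig0 : \sum_i Num.sg (y i) * x i = 0.
  case: (ltrgtP (\sum_i Num.sg (y i) * x i) 0) => // h.
  - exfalso; apply: nxny.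
    have H' : statZ (fun i => - x i) y Z.
      split => //.
      + by move=> i j; rewrite mulrNN; exact: Hs.
      + by move=> i; under eq_bigr do rewrite mulrN; rewrite sumrN Hr oppr0.
    have h' : 0 < \sum_i Num.sg (y i) * - x i.
      by under eq_bigr do rewrite mulrN; rewrite sumrN oppr_gt0.
    by move=> i; have := sigma_pos H' h' i => <-; rewrite opprK.
  - by exfalso; apply: nxy; exact: sigma_pos H h.
split => //.
have e0 : \sum_i \sum_j Z i j * (x i * x j) = 0.
  apply: big1 => i _.
  transitivity (x i * \sum_j Z i j * x j); last by rewrite Hr mulr0.
  by rewrite mulr_sumr; apply: eq_bigr => j _; ring.
have A : \sum_i \sum_j `|x i * x j - y i * y j| <=
         \sum_i \sum_j `|y i| * `|y j|.
  have e1 : \sum_i \sum_j `|x i * x j - y i * y j| =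
            - \sum_i \sum_j Z i j * (y i * y j).
    transitivity (\sum_i \sum_j (Z i j * (x i * x j) - Z i j * (y i * y j))).
      by apply: eq_bigr => i _; apply: eq_bigr => j _; rewrite -(ZM H); ring.
    under eq_bigr do rewrite sumrB.
    by rewrite sumrB e0 sub0r.
  rewrite e1 -sumrN; apply: ler_sum => i _; rewrite -sumrN; apply: ler_sum => j _.
  have := Zabs H i j; have := normr_ge0 (y i * y j).
  have h3 := ler_norm (- (Z i j * (y i * y j))).
  rewrite normrN normrM in h3; rewrite -normrM; nra.
have B : \sum_i \sum_j Num.sg (y i) * Num.sg (y j) * (x i * x j - y i * y j) =
         - \sum_i \sum_j `|y i| * `|y j|.
  transitivity (\sum_i \sum_j ((Num.sg (y i) * x i) * (Num.sg (y j) * x j)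
                 - `|y i| * `|y j|)).
    by apply: eq_bigr => i _; apply: eq_bigr => j _; rewrite !normrEsg; ring.
  under eq_bigr do rewrite sumrB.
  rewrite sumrB big1 ?sub0r // => i _.
  by rewrite -mulr_sumr sig0 mulr0.
have C : \sum_i \sum_j (`|x i * x j - y i * y j| +
     Num.sg (y i) * Num.sg (y j) * (x i * x j - y i * y j)) = 0.
  apply/eqP; rewrite eq_le; apply/andP; split.
    under eq_bigr do rewrite big_split /=.
    rewrite big_split /= B; lra.
  apply: sumr_ge0 => i _; apply: sumr_ge0 => j _.
  have h1 : `|Num.sg (y i) * Num.sg (y j)| <= 1.
    by rewrite normrM; apply: mulr_ile1; rewrite ?normr_ge0 ?sg_abs1.
  have h3 := ler_norm (- (Num.sg (y i) * Num.sg (y j) * (x i * x j - y i * y j))).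
  rewrite normrN normrM in h3.
  have := normr_ge0 (x i * x j - y i * y j); have := normr_ge0 (Num.sg (y i) * Num.sg (y j)).
  nra.
have nn : forall i j, 0 <= `|x i * x j - y i * y j| +
     Num.sg (y i) * Num.sg (y j) * (x i * x j - y i * y j).
  move=> i j.
  have h1 : `|Num.sg (y i) * Num.sg (y j)| <= 1.
    by rewrite normrM; apply: mulr_ile1; rewrite ?normr_ge0 ?sg_abs1.
  have h3 := ler_norm (- (Num.sg (y i) * Num.sg (y j) * (x i * x j - y i * y j))).
  rewrite normrN normrM in h3.
  have := normr_ge0 (x i * x j - y i * y j); have := normr_ge0 (Num.sg (y i) * Num.sg (y j)).
  nra.
move=> i.
have [yi0|yi] := eqVneq (y i) 0.
  by rewrite (offsupp H yi0) yi0.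
have h1 := psumr_eq0P (fun i _ => sumr_ge0 _ (fun j _ => nn i j)) C (i:=i) isT.
have h2 := psumr_eq0P (fun j _ => nn i j) h1 (i:=i) isT.
have ss : Num.sg (y i) * Num.sg (y i) = 1 by rewrite -expr2 sqr_sg yi.
rewrite ss mul1r in h2.
apply: sq_le_abs.
have := ler_norm (x i * x i - y i * y i); lra.
Qed.

End PartA3.
Section PartB1.
Variable R : realType.

Definition phi (m b : R) := if 0 < m then b else if m < 0 then - b else `|b|.

Lemma termLB (m b c t : R) : 0 < t ->
  - (t ^+ 2 * `|c|) <= `|m + t * b + t ^+ 2 * c| - `|m| - t * phi m b.
Proof.
move=> t0; have t2 : 0 <= t ^+ 2 by rewrite sqr_ge0.
have hc : - `|c| <= c by have := ler_norm (- c); rewrite normrN; lra.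
have hc2 : t ^+ 2 * - `|c| <= t ^+ 2 * c by apply: ler_wpM2l.
rewrite mulrN in hc2.
have hc3 : t ^+ 2 * c <= t ^+ 2 * `|c| by apply: ler_wpM2l => //; exact: ler_norm.
rewrite /phi; case: ifPn => hm; [|case: ifPn => hm2].
- have := ler_norm (m + t * b + t ^+ 2 * c); rewrite (gtr0_norm hm) => hh; lra.
- have := ler_norm (- (m + t * b + t ^+ 2 * c)); rewrite normrN (ltr0_norm hm2) mulrN => hh; lra.
- have m0 : m = 0 by apply/eqP; rewrite eq_le !leNgt hm hm2.
  rewrite m0 add0r normr0 subr0.
  have := lerB_normD (t * b) (t ^+ 2 * c).
  rewrite !normrM (gtr0_norm t0) -expr2; lra.
Qed.

Lemma termNear (m b c : R) : \forall t \near 0^'+,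
  `|(`|m + t * b + t ^+ 2 * c| - `|m|) / t - phi m b| <= t * `|c|.
Proof.
have [m0|mn0] := eqVneq m 0.
  near=> t.
  have t0 : 0 < t by near: t; exact: nbhs_right_gt.
  have -> : (`|m + t * b + t ^+ 2 * c| - `|m|) / t = `|b + t * c|.
    rewrite m0 normr0 subr0 add0r.
    have -> : t * b + t ^+ 2 * c = t * (b + t * c) by ring.
    by rewrite normrM (gtr0_norm t0) mulrC mulKf ?gt_eqF.
  rewrite /phi m0 ltxx.
  apply: le_trans (ler_dist_dist _ _) _.
  by rewrite addrC addKr normrM (gtr0_norm t0).
have mpos : 0 < `|m| by rewrite normr_gt0.
have dpos : 0 < `|m| / (`|b| + `|c| + 1).
  by apply: divr_gt0 => //; have := normr_ge0 b; have := normr_ge0 c; lra.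
near=> t.
have t0 : 0 < t by near: t; exact: nbhs_right_gt.
have t1 : t <= 1 by near: t; exact: nbhs_right_le.
have td : t < `|m| / (`|b| + `|c| + 1) by near: t; exact: nbhs_right_lt.
have t1' : 0 <= 1 - t by lra.
have hbc : t * (`|b| + `|c|) < `|m|.
  have hp : 0 < `|b| + `|c| + 1 by have := normr_ge0 b; have := normr_ge0 c; lra.
  rewrite ltr_pdivlMr // in td.
  have := normr_ge0 b; have := normr_ge0 c; nra.
have hb : - (t * `|b|) <= t * b.
  have := ler_norm (- b); rewrite normrN => h.
  rewrite -mulrN; apply: ler_wpM2l; lra.
have hc : - (t * `|c|) <= t ^+ 2 * c.
  have := ler_norm (- c); rewrite normrN => h.
  have h' : - `|c| <= c by lra.
  have := normr_ge0 c => h0.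
  have h2 : t ^+ 2 * - `|c| <= t ^+ 2 * c by apply: ler_wpM2l; rewrite ?sqr_ge0.
  have h3 := mulr_ge0 (mulr_ge0 (ltW t0) h0) (t1' : 0 <= 1 - t).
  have e : t * `|c| * (1 - t) = t * `|c| - t ^+ 2 * `|c| by ring.
  rewrite e mulrN in h3 h2; lra.
have hb' : t * b <= t * `|b|.
  by apply: ler_wpM2l; [lra|exact: ler_norm].
have hc' : t ^+ 2 * c <= t * `|c|.
  have := ler_norm c => h; have := normr_ge0 c => h0.
  have h2 : t ^+ 2 * c <= t ^+ 2 * `|c| by apply: ler_wpM2l; rewrite ?sqr_ge0.
  have h3 := mulr_ge0 (mulr_ge0 (ltW t0) h0) (t1' : 0 <= 1 - t).
  have e : t * `|c| * (1 - t) = t * `|c| - t ^+ 2 * `|c| by ring.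
  rewrite e in h3; lra.
have key : `|(`|m + t * b + t ^+ 2 * c| - `|m|) / t - phi m b| = t * `|c|.
  rewrite /phi; case: ifPn => hm; [|case: ifPn => hm2].
  - have hp : 0 < m + t * b + t ^+ 2 * c by rewrite (gtr0_norm hm) in hbc; lra.
    rewrite (gtr0_norm hm) (gtr0_norm hp).
    have -> : m + t * b + t ^+ 2 * c - m = t * (b + t * c) by ring.
    rewrite mulrC mulKf ?gt_eqF // addrAC subrr add0r.
    by rewrite normrM (gtr0_norm t0).
  - have hp : m + t * b + t ^+ 2 * c < 0 by rewrite (ltr0_norm hm2) in hbc; lra.
    rewrite (ltr0_norm hm2) (ltr0_norm hp).
    have -> : - (m + t * b + t ^+ 2 * c) - - m = t * (- b - t * c) by ring.
    rewrite mulrC mulKf ?gt_eqF // addrAC subrr add0r.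
    by rewrite normrN normrM (gtr0_norm t0).
  - by exfalso; move: mn0; rewrite eq_le !leNgt hm hm2.
by rewrite key.
Unshelve. all: by end_near.
Qed.

Lemma cvg_bound (g : R -> R) (l K : R) :
  (\forall t \near 0^'+, `|g t - l| <= t * K) -> g t @[t --> 0^'+] --> l.
Proof.
move=> hb; apply/cvgrPdist_le => e e0.
have kp : 0 < e / (`|K| + 1) by apply: divr_gt0 => //; have := normr_ge0 K; lra.
near=> t.
have t0 : 0 < t by near: t; exact: nbhs_right_gt.
have td : t < e / (`|K| + 1) by near: t; exact: nbhs_right_lt.
have h : `|g t - l| <= t * K by near: t; exact: hb.
rewrite distrC; apply: le_trans h _.
have hp : 0 < `|K| + 1 by have := normr_ge0 K; lra.
rewrite ltr_pdivlMr // in td.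
have := ler_norm K; have := normr_ge0 K; nra.
Unshelve. all: by end_near.
Qed.

End PartB1.
Section PartB2.
Variables (R : realType) (n : nat) (a u : 'cV[R]_n).

Lemma mxE2 (v : 'cV[R]_n) i j :
  (v *m v^T - a *m a^T) i j = v i 0 * v j 0 - a i 0 * a j 0.
Proof. by rewrite !mxE !big_ord1 !mxE. Qed.

Lemma fobjE (v : 'cV[R]_n) :
  fobj a v = 2^-1 * \sum_i \sum_j `|v i 0 * v j 0 - a i 0 * a j 0|.
Proof.
rewrite /fobj /l1; congr (_ * _); apply: eq_bigr => i _; apply: eq_bigr => j _.
by rewrite mxE2.
Qed.

Lemma l1cE (v : 'cV[R]_n) : l1 v = \sum_i `|v i 0|.
Proof. by rewrite /l1; apply: eq_bigr => i _; rewrite big_ord1. Qed.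

Lemma l1_ge0 m k (A : 'M[R]_(m, k)) : 0 <= l1 A.
Proof. by apply: sumr_ge0 => i _; apply: sumr_ge0 => j _. Qed.

Lemma addE (h : 'cV[R]_n) t i : (u + t *: h) i 0 = u i 0 + t * h i 0.
Proof. by rewrite !mxE. Qed.

Definition mm i j := u i 0 * u j 0 - a i 0 * a j 0.
Definition bb (h : 'cV[R]_n) i j := u i 0 * h j 0 + h i 0 * u j 0.
Definition cc (h : 'cV[R]_n) i j := h i 0 * h j 0.
Definition Dfun (h : 'cV[R]_n) := 2^-1 * \sum_i \sum_j phi (mm i j) (bb h i j).

Lemma fobj_u : fobj a u = 2^-1 * \sum_i \sum_j `|mm i j|.
Proof. by rewrite fobjE. Qed.

Lemma fobj_shift (h : 'cV[R]_n) t : fobj a (u + t *: h) =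
  2^-1 * \sum_i \sum_j `|mm i j + t * bb h i j + t ^+ 2 * cc h i j|.
Proof.
rewrite fobjE; congr (_ * _); apply: eq_bigr => i _; apply: eq_bigr => j _.
by rewrite !addE /mm /bb /cc; congr `|_|; ring.
Qed.

Lemma dirder_eq (h : 'cV[R]_n) : dirder (fobj a) u h = Dfun h.
Proof.
rewrite /dirder; apply: cvg_lim; first exact: Rhausdorff.
apply: (@cvg_bound _ _ _ (2^-1 * \sum_i \sum_j `|cc h i j|)).
have HF : \forall t \near 0^'+, forall k : 'I_n * 'I_n,
   `|(`|mm k.1 k.2 + t * bb h k.1 k.2 + t ^+ 2 * cc h k.1 k.2| - `|mm k.1 k.2|) / t
     - phi (mm k.1 k.2) (bb h k.1 k.2)| <= t * `|cc h k.1 k.2|.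
  by apply: filter_forall => k; exact: termNear.
apply: filterS HF => t Ht.
have -> : (fobj a (u + t *: h) - fobj a u) / t - Dfun h =
   2^-1 * \sum_i \sum_j ((`|mm i j + t * bb h i j + t ^+ 2 * cc h i j| - `|mm i j|) / t
     - phi (mm i j) (bb h i j)).
  rewrite fobj_shift fobj_u /Dfun.
  rewrite -mulrBr -mulrA -mulrBr; congr (_ * _).
  rewrite -sumrB mulr_suml -sumrB; apply: eq_bigr => i _.
  by rewrite -sumrB mulr_suml -sumrB; apply: eq_bigr => j _; rewrite mulrBl.
rewrite normrM (ger0_norm (_ : 0 <= 2^-1)); last by rewrite invr_ge0.
rewrite mulrCA; apply: ler_wpM2l; first by rewrite invr_ge0.
apply: le_trans (ler_norm_sum _ _ _) _.
rewrite mulr_sumr; apply: ler_sum => i _.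
apply: le_trans (ler_norm_sum _ _ _) _.
rewrite mulr_sumr; apply: ler_sum => j _.
exact: (Ht (i, j)).
Qed.

Lemma l1sq (h : 'cV[R]_n) : l1 h ^+ 2 = \sum_i \sum_j `|cc h i j|.
Proof.
rewrite l1cE expr2 mulr_suml; apply: eq_bigr => i _.
by rewrite mulr_sumr; apply: eq_bigr => j _; rewrite /cc normrM.
Qed.

Lemma quotLB (h : 'cV[R]_n) t : 0 < t ->
  - (t ^+ 2 / 2 * l1 h ^+ 2) <= fobj a (u + t *: h) - fobj a u - t * Dfun h.
Proof.
move=> t0.
have -> : fobj a (u + t *: h) - fobj a u - t * Dfun h =
   2^-1 * \sum_i \sum_j (`|mm i j + t * bb h i j + t ^+ 2 * cc h i j| - `|mm i j|
     - t * phi (mm i j) (bb h i j)).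
  rewrite fobj_shift fobj_u /Dfun mulrCA -!mulrBr; congr (_ * _).
  rewrite mulr_sumr -!sumrB; apply: eq_bigr => i _.
  by rewrite mulr_sumr -!sumrB; apply: eq_bigr => j _.
have e : \sum_i \sum_j - (t ^+ 2 * `|cc h i j|) =
    - (t ^+ 2 * \sum_i \sum_j `|cc h i j|).
  by rewrite mulr_sumr -sumrN; apply: eq_bigr => i _; rewrite mulr_sumr -sumrN.
rewrite l1sq (_ : - (t ^+ 2 / 2 * _) =
   2^-1 * (- (t ^+ 2 * \sum_i \sum_j `|cc h i j|))); last by ring.
rewrite -e; apply: ler_wpM2l; first by rewrite invr_ge0.
apply: ler_sum => i _; apply: ler_sum => j _.
exact: termLB.
Qed.

Lemma quotLB' (h : 'cV[R]_n) t : 0 < t ->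
  - l1 h ^+ 2 <= (fobj a (u + t *: h) - fobj a u - t * dirder (fobj a) u h) / (t ^+ 2 / 2).
Proof.
move=> t0; have t2 : 0 < t ^+ 2 / 2 by apply: divr_gt0; rewrite ?exprn_gt0.
rewrite dirder_eq ler_pdivlMr //.
have := quotLB h t0; rewrite mulNr mulrC; lra.
Qed.

End PartB2.
Section PartB3.
Variables (R : realType) (n : nat) (a u : 'cV[R]_n).

Lemma stat_statZ : stationary a u ->
  exists Z, statZ (fun i => u i 0) (fun i => a i 0) Z.
Proof.
case=> Z [ZT ZS] Zu; exists (fun i j => Z i j); split.
- by move=> i j; have := congr1 (fun A : 'M[R]_n => A j i) ZT; rewrite mxE.
- by move=> i j; have := ZS i j; rewrite mxE2.
- by move=> i; have := congr1 (fun A : 'cV[R]_n => A i 0) Zu; rewrite !mxE.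
Qed.

Lemma phi_ge (m b z : R) : (0 < m -> z = 1) -> (m < 0 -> z = -1) ->
  (m = 0 -> -1 <= z <= 1) -> z * b <= phi m b.
Proof.
move=> h1 h2 h3; rewrite /phi; case: ifPn => hm; [|case: ifPn => hm2].
- by rewrite h1 // mul1r.
- by rewrite h2 // mulN1r.
- have m0 : m = 0 by apply/eqP; rewrite eq_le !leNgt hm hm2.
  have /andP[z1 z2] := h3 m0.
  have := ler_norm (z * b); rewrite normrM => hz.
  have : `|z| <= 1 by rewrite ler_norml z1 z2.
  have := normr_ge0 b; have := normr_ge0 z; nra.
Qed.

Lemma Dfun_ge0 : stationary a u -> forall h, 0 <= Dfun a u h.
Proof.
move=> /stat_statZ [Z [Hsym Hs Hr]] h.
rewrite /Dfun; apply: mulr_ge0; first by rewrite invr_ge0.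
have e : \sum_i \sum_j Z i j * bb u h i j = 0.
  transitivity (\sum_i \sum_j (h i 0 * (Z i j * u j 0) + h j 0 * (Z j i * u i 0))).
    by apply: eq_bigr => i _; apply: eq_bigr => j _; rewrite /bb (Hsym j i); ring.
  under eq_bigr do rewrite big_split /=.
  rewrite big_split /= [X in _ + X]exchange_big /=.
  by rewrite !big1 ?addr0 // => i _; rewrite -mulr_sumr Hr mulr0.
suff : \sum_i \sum_j Z i j * bb u h i j <=
    \sum_i \sum_j phi (mm a u i j) (bb u h i j) by rewrite e.
apply: ler_sum => i _; apply: ler_sum => j _.
by have [h1 [h2 h3]] := Hs i j; apply: phi_ge.
Qed.

Lemma abs_eq (vi vj ai aj : R) : `|vi| <= `|ai| -> `|vj| <= `|aj| ->
  `|vi * vj - ai * aj| = `|ai| * `|aj| - (Num.sg ai * vi) * (Num.sg aj * vj).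
Proof.
move=> hi hj.
have [ai0|ai0] := eqVneq ai 0.
  move: hi; rewrite ai0 normr0 normr_le0 => /eqP ->.
  by rewrite !(mul0r, mulr0, normr0, subrr, sgr0, oppr0, subr0).
have [aj0|aj0] := eqVneq aj 0.
  move: hj; rewrite aj0 normr0 normr_le0 => /eqP ->.
  by rewrite !(mul0r, mulr0, normr0, subrr, sgr0, oppr0, subr0).
have si : Num.sg ai * Num.sg ai = 1 by rewrite -expr2 sqr_sg ai0.
have sj : Num.sg aj * Num.sg aj = 1 by rewrite -expr2 sqr_sg aj0.
have e : vi * vj - ai * aj = (Num.sg ai * Num.sg aj) *
    ((Num.sg ai * vi) * (Num.sg aj * vj) - `|ai| * `|aj|).
  rewrite !normrEsg.
  transitivity ((Num.sg ai * Num.sg ai) * (Num.sg aj * Num.sg aj) * (vi * vj)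
     - (Num.sg ai * Num.sg ai) * (Num.sg aj * Num.sg aj) * (ai * aj)); last by ring.
  by rewrite si sj !mul1r.
have hp : `|Num.sg ai * vi| <= `|ai| by rewrite normrM normr_sg ai0 mul1r.
have hq : `|Num.sg aj * vj| <= `|aj| by rewrite normrM normr_sg aj0 mul1r.
have hpq : (Num.sg ai * vi) * (Num.sg aj * vj) <= `|ai| * `|aj|.
  apply: le_trans (ler_norm _) _; rewrite normrM.
  by apply: ler_pM => //; rewrite normr_ge0.
have hneg : Num.sg ai * vi * (Num.sg aj * vj) - `|ai| * `|aj| <= 0 by lra.
by rewrite e normrM (normrM (Num.sg ai)) !normr_sg ai0 aj0 !mul1r (ler0_norm hneg) opprB.
Qed.

Lemma seg (eps : R) (w : 'cV[R]_n) : eps ^+ 2 = 1 ->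
  (forall i, w i 0 = eps * a i 0 - u i 0) ->
  (forall i, `|u i 0| <= `|a i 0|) -> \sum_i Num.sg (a i 0) * u i 0 = 0 ->
  forall t, 0 <= t <= 1 ->
  fobj a (u + t *: w) = 2^-1 * (l1 a ^+ 2 - t ^+ 2 * l1 a ^+ 2).
Proof.
move=> he hw K1 K2 t /andP[t0 t1].
have heps : `|eps| = 1.
  have := real_normK (num_real eps); rewrite he => e1.
  have := normr_ge0 eps; rewrite expr2 in e1; nra.
have hv : forall i, `|(u + t *: w) i 0| <= `|a i 0|.
  move=> i; rewrite addE hw.
  have -> : u i 0 + t * (eps * a i 0 - u i 0) = (1 - t) * u i 0 + (t * eps) * a i 0 by ring.
  apply: le_trans (ler_normD _ _) _.
  rewrite !normrM heps mulr1 (ger0_norm t0) ger0_norm; last by lra.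
  have := K1 i; have := normr_ge0 (u i 0); have := normr_ge0 (a i 0); nra.
rewrite fobjE; congr (_ * _).
under eq_bigr do under eq_bigr do rewrite abs_eq ?hv //.
under eq_bigr do rewrite sumrB.
rewrite sumrB l1cE !expr2.
have hs : \sum_i Num.sg (a i 0) * (u + t *: w) i 0 = t * eps * \sum_i `|a i 0|.
  transitivity (\sum_i ((1 - t) * (Num.sg (a i 0) * u i 0) + t * eps * `|a i 0|)).
    by apply: eq_bigr => i _; rewrite addE hw normrEsg; ring.
  by rewrite big_split /= -!mulr_sumr K2 mulr0 add0r.
have prodE : forall F : 'I_n -> R,
    \sum_i \sum_j F i * F j = (\sum_i F i) * (\sum_i F i).
  by move=> F; rewrite mulr_suml; apply: eq_bigr => i _; rewrite mulr_sumr.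
rewrite (prodE (fun i => `|a i 0|)).
rewrite (prodE (fun i => Num.sg (a i 0) * (u + t *: w) i 0)) hs.
transitivity ((\sum_i `|a i 0|) * (\sum_i `|a i 0|) -
   (eps ^+ 2) * (t * t) * ((\sum_i `|a i 0|) * (\sum_i `|a i 0|))); first ring.
by rewrite he mul1r.
Qed.

End PartB3.
Section PartC1.
Variable R : realType.

Lemma liminf_ge (T : choiceType) (X : filteredType T) (F : set_system X) (FF : Filter F) (g : X -> R) (c : R) :
  (forall e, 0 < e -> F [set p | c - e <= g p]) ->
  (c%:E <= limf_einf (fun p => (g p)%:E) F)%E.
Proof.
move=> H; rewrite limf_einfE; apply/lee_addgt0Pr => e e0.
have hV := H e e0.
have : ((c - e)%:E <= ereal_sup [set ereal_inf ((fun p => (g p)%:E) @` V) | V in F])%E.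
  have hmem : [set ereal_inf ((fun p => (g p)%:E) @` V) | V in F]
     (ereal_inf ((fun p => (g p)%:E) @` [set p | c - e <= g p])).
    by exists [set p | c - e <= g p].
  apply: le_trans (ereal_sup_ubound hmem).
  by apply: le_ereal_inf_tmp => _ [p hp <-]; rewrite lee_fin.
move=> h; have := leeD2r e%:E h; rewrite -EFinD subrK; exact.
Qed.

Lemma liminf_le (T : choiceType) (X : filteredType T) (F : set_system X) (g : X -> R) (c : R) :
  (forall V, F V -> exists2 p, V p & g p <= c) ->
  (limf_einf (fun p => (g p)%:E) F <= c%:E)%E.
Proof.
move=> H; rewrite limf_einfE; apply: ge_ereal_sup => _ [V FV <-].
have [p Vp gp] := H V FV.
apply: le_trans (_ : (g p)%:E <= _)%E; last by rewrite lee_fin.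
by apply: ereal_inf_lbound; exists p.
Qed.

Lemma prod_at (U : topologicalType) (z : U) (V : set (R * U)) :
  filter_prod (0^'+) (nbhs z) V -> \forall t \near 0^'+, V (t, z).
Proof.
case=> [[A B]] /= [FA GB] sub.
apply: filterS FA => t At; apply: sub; split => //.
exact: nbhs_singleton GB.
Qed.

Lemma exists_small (P : R -> Prop) : (\forall t \near 0^'+, P t) ->
  exists t, [/\ 0 < t, t <= 1 & P t].
Proof.
move=> hP.
have : \forall t \near 0^'+, [/\ 0 < t, t <= 1 & P t].
  near=> t; split.
  - by near: t; exact: nbhs_right_gt.
  - by near: t; exact: nbhs_right_le.
  - by near: t; exact: hP.
by move=> /filter_ex.
Unshelve. all: by end_near.
Qed.

Lemma abs_seg (eps x y : R) : eps ^+ 2 = 1 -> `|x| <= `|y| ->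
  `|eps * y - x| = `|y| - eps * (Num.sg y * x).
Proof.
move=> he hxy.
have [y0|y0] := eqVneq y 0.
  move: hxy; rewrite y0 normr0 normr_le0 => /eqP ->.
  by rewrite !(mul0r, mulr0, normr0, subrr, sgr0, oppr0, subr0).
set s := eps * Num.sg y.
have ss : s * s = 1.
  have e2 : Num.sg y * Num.sg y = 1 by rewrite -expr2 sqr_sg y0.
  transitivity ((eps ^+ 2) * (Num.sg y * Num.sg y)); first by rewrite /s; ring.
  by rewrite he e2 mul1r.
have hs : `|s| = 1.
  have := real_normK (num_real s); rewrite [s ^+ 2]expr2 ss => e1.
  have := normr_ge0 s; rewrite expr2 in e1; nra.
have e : eps * y - x = s * (`|y| - s * x).
  by rewrite mulrBr mulrA ss mul1r /s -mulrA -numEsg.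
have hsx : `|s * x| <= `|y| by rewrite normrM hs mul1r.
rewrite e normrM hs mul1r ger0_norm; last first.
  by have := ler_norm (s * x); lra.
by rewrite /s; congr (_ - _); ring.
Qed.

End PartC1.
Section PartC2.
Variables (R : realType) (n : nat).

Lemma l1_near (w : 'cV[R]_n) e : 0 < e -> exists2 d, 0 < d &
  forall h : 'cV[R]_n, (forall i, `|h i 0 - w i 0| < d) -> l1 h ^+ 2 <= l1 w ^+ 2 + e.
Proof.
move=> e0.
have L0 := l1_ge0 w.
have N0 : 0 <= (n%:R : R) by rewrite ler0n.
pose K := (n%:R + 1) * (2 * l1 w + n%:R + 1).
have K0 : 0 < K by rewrite /K; apply: mulr_gt0; lra.
pose d := Num.min 1 (e / K).
have d0 : 0 < d by rewrite /d lt_min ltr01 divr_gt0.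
have d1 : d <= 1 by rewrite /d ge_min lexx.
have dK : d * K <= e.
  have : d <= e / K by rewrite /d ge_min lexx orbT.
  by rewrite ler_pdivlMr.
exists d => // h hh.
have hl : l1 h <= l1 w + n%:R * d.
  rewrite !l1cE.
  have -> : \sum_i `|w i 0| + n%:R * d = \sum_i (`|w i 0| + d).
    by rewrite big_split /= sumr_const card_ord mulr_natl.
  apply: ler_sum => i _.
  have := hh i; have := ler_normD (w i 0) (h i 0 - w i 0).
  rewrite addrC subrK; lra.
have hl0 := l1_ge0 h.
have : l1 h ^+ 2 <= (l1 w + n%:R * d) ^+ 2.
  rewrite !expr2; apply: ler_pM => //.
have h2 : n%:R * d * (n%:R * d) <= n%:R * d * n%:R.
  apply: ler_wpM2l; first by apply: mulr_ge0 => //; lra.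
  have : n%:R * d <= n%:R * 1 by apply: ler_wpM2l.
  by rewrite mulr1.
rewrite /K in dK.
nra.
Qed.

End PartC2.
Unset Implicit Arguments.

Theorem corollary1 (R : realType) (n : nat) (us u w : 'cV[R]_n) :
  us != 0 ->
  spurious_stationary us u ->
  (w = us - u \/ w = - us - u) ->
  (* (i) *)
  (d2sub (fobj us) u w = (- l1 us ^+ 2)%:E /\ - l1 us ^+ 2 < 0) /\
  (* (ii) *)
  (ereal_inf [set d2par (fobj us) u w z | z in [set: 'cV[R]_n]] = (- l1 us ^+ 2)%:E /\
   (forall eps : R, 0 < eps ->
      exists z : 'cV[R]_n, (d2par (fobj us) u w z < (- l1 us ^+ 2 + eps)%:E)%E)) /\
  (* (iii) *)
  (sd2quot (fobj us) u w t @[t --> 0^'+] --> - l1 us ^+ 2).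
Proof.
move=> us0 [stat [nua numa]] hw.
have [Z HZ] := stat_statZ stat.
have nxy : ~ (forall i, u i 0 = us i 0).
  by move=> h; apply: nua; apply/matrixP => i j; rewrite (ord1 j); exact: h.
have nxny : ~ (forall i, u i 0 = - us i 0).
  by move=> h; apply: numa; apply/matrixP => i j; rewrite (ord1 j) mxE; exact: h.
have [K2 K1] := structure HZ nxy nxny.
have [eps he hwE] : exists2 eps : R, eps ^+ 2 = 1 &
    forall i, w i 0 = eps * us i 0 - u i 0.
  case: hw => ->; [exists 1 | exists (-1)].
  - by rewrite expr1n.
  - by move=> i; rewrite !mxE mul1r.
  - by rewrite sqrrN expr1n.
  - by move=> i; rewrite !mxE mulN1r.
have segF := @seg R n us u eps w he hwE K1 K2.
have fu : fobj us u = 2^-1 * l1 us ^+ 2.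
  have h01 : 0 <= (0:R) <= 1 by rewrite lexx ler01.
  have := segF _ h01; rewrite scale0r addr0 => ->; ring.
have Lpos : 0 < l1 us.
  rewrite lt_def l1_ge0 andbT; apply/eqP => L0.
  have : us = 0.
    apply/matrixP => i j; rewrite /l1 in L0.
    have h1 := psumr_eq0P (fun i _ => sumr_ge0 _ (fun j _ => normr_ge0 _)) L0 (i:=i) isT.
    have h2 := psumr_eq0P (fun j _ => normr_ge0 _) h1 (i:=j) isT.
    by rewrite mxE; apply/normr0_eq0.
  by move/eqP; rewrite (negbTE us0).
have dw : dirder (fobj us) u w = 0.
  rewrite /dirder; apply: cvg_lim; first exact: Rhausdorff.
  apply: (@cvg_bound _ _ _ (l1 us ^+ 2)).
  near=> t.
  have t0 : 0 < t by near: t; exact: nbhs_right_gt.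
  have t1 : t <= 1 by near: t; exact: nbhs_right_le.
  have ht : 0 <= t <= 1 by rewrite (ltW t0) t1.
  rewrite segF // fu.
  have -> : (2^-1 * (l1 us ^+ 2 - t ^+ 2 * l1 us ^+ 2) - 2^-1 * l1 us ^+ 2) / t - 0
            = - (t * l1 us ^+ 2 / 2).
    by field; rewrite gt_eqF.
  have X0 : 0 <= t * l1 us ^+ 2 by apply: mulr_ge0; [lra | exact: sqr_ge0].
  rewrite normrN ger0_norm; lra.
have Qw : forall t, 0 < t -> t <= 1 ->
   (fobj us (u + t *: w) - fobj us u - t * dirder (fobj us) u w) / (t ^+ 2 / 2)
   = - l1 us ^+ 2.
  move=> t t0 t1; rewrite segF ?(ltW t0) ?t1 // fu dw.
  by field; rewrite gt_eqF.
have lw : l1 w = l1 us.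
  rewrite !l1cE.
  transitivity (\sum_i (`|us i 0| - eps * (Num.sg (us i 0) * u i 0))).
    by apply: eq_bigr => i _; rewrite hwE; apply: abs_seg.
  by rewrite sumrB -mulr_sumr K2 mulr0 subr0.
split; [split|split].
- rewrite /d2sub; apply/eqP; rewrite eq_le; apply/andP; split.
  + apply: liminf_le => V hV.
    have [t [t0 t1 Vt]] := exists_small (prod_at hV).
    by exists (t, w) => //=; rewrite Qw.
  + apply: liminf_ge => e e0.
    have [d d0 hd] := l1_near w e0.
    exists ([set t | 0 < t], [set h : 'cV[R]_n | forall i j, ball (w i j) d (h i j)]).
      split => /=; first exact: nbhs_right_gt.
      exists (fun i j => ball (w i j) d) => //.
      by move=> i j; exact: nbhsx_ballx.
    move=> [t h] /= [t0 hh].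
    have hl : l1 h ^+ 2 <= l1 us ^+ 2 + e.
      rewrite -lw; apply: hd => i; have := hh i 0.
      by rewrite -ball_normE /ball_ /= distrC.
    have := @quotLB' R n us u h t t0; lra.
- by rewrite oppr_lt0 exprn_gt0.
- have d2pge : forall z, ((- l1 us ^+ 2)%:E <= d2par (fobj us) u w z)%E.
    move=> z; rewrite /d2par; apply: liminf_ge => e e0.
    have [d d0 hd] := l1_near w e0.
    have Mz0 : 0 < l1 z + 1 by have := l1_ge0 z; lra.
    exists ([set t | 0 < t /\ t < d / (l1 z + 1)],
            [set z' : 'cV[R]_n | forall i j, ball (z i j) 1 (z' i j)]).
      split => /=.
        near=> t; split.
          by near: t; exact: nbhs_right_gt.
        by near: t; apply: nbhs_right_lt; exact: divr_gt0.
      exists (fun i j => ball (z i j) 1) => //.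
      by move=> i j; exact: nbhsx_ballx.
    move=> [t z'] /= [[t0 td] hz].
    have eqv : u + t *: w + (2^-1 * t ^+ 2) *: z' = u + t *: (w + (t / 2) *: z').
      by apply/matrixP => i j; rewrite !mxE; ring.
    rewrite eqv dw mulr0 subr0.
    have hl : l1 (w + (t / 2) *: z') ^+ 2 <= l1 us ^+ 2 + e.
      rewrite -lw; apply: hd => i.
      have -> : (w + (t / 2) *: z') i 0 - w i 0 = t / 2 * z' i 0.
        by rewrite !mxE; ring.
      have hzi : `|z' i 0| <= l1 z + 1.
        have h1 := hz i 0; rewrite -ball_normE /ball_ /= in h1.
        have h2 : `|z i 0| <= l1 z.
          rewrite l1cE (bigD1 i) //=.
          have : 0 <= \sum_(j | j != i) `|z j 0| by apply: sumr_ge0 => j _.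
          lra.
        have := ler_normD (z i 0) (z' i 0 - z i 0).
        rewrite addrC subrK distrC; lra.
      rewrite normrM ger0_norm; last by lra.
      rewrite ltr_pdivlMr // in td.
      have := normr_ge0 (z' i 0); nra.
    have hD := @Dfun_ge0 R n us u stat (w + (t / 2) *: z').
    have hq := @quotLB R n us u (w + (t / 2) *: z') t t0.
    have t2 : 0 < t ^+ 2 / 2 by apply: divr_gt0; rewrite ?exprn_gt0.
    rewrite ler_pdivlMr //.
    have := ler_wpM2l (ltW t2) hl.
    have := mulr_ge0 (ltW t0) hD.
    lra.
  have d2p0 : (d2par (fobj us) u w 0 <= (- l1 us ^+ 2)%:E)%E.
    rewrite /d2par; apply: liminf_le => V hV.
    have [t [t0 t1 Vt]] := exists_small (prod_at hV).
    by exists (t, 0) => //=; rewrite scaler0 addr0 Qw.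
  split.
  + apply/eqP; rewrite eq_le; apply/andP; split.
    * apply: le_trans d2p0; apply: ereal_inf_lbound; by exists 0.
    * by apply: le_ereal_inf_tmp => _ [z _ <-]; exact: d2pge.
  + move=> e e0; exists 0; apply: le_lt_trans d2p0 _; rewrite lte_fin; lra.
- apply: (@cvg_bound _ _ _ 0).
  near=> t.
  have t0 : 0 < t by near: t; exact: nbhs_right_gt.
  have t1 : t <= 1 by near: t; exact: nbhs_right_le.
  by rewrite /sd2quot Qw // subrr normr0 mulr0.
Unshelve. all: by end_near.
Qed.
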